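(* The binary predicate $\mathrm{Sl}$ on $\mathsf{W}^N_3$ is first-order definable in the structure $(\mathsf{W}^N_3,\prec,\Diamond_1,\Diamond_3)$.
   Context: Words are finite strings over $\mathbb{N}$; $\mathsf{W}_\omega$ is the set of all words, $\Lambda$ the empty word, $AB$ concatenation. For $k\in\mathbb{N}$, $\mathsf{S}_k$ is the set of words all of whose symbols are $\ge k$; $\mathsf{W}_3$ is the set of words all of whose symbols are $\le3$. Given a linear preorder $\precsim$ with $A\sim B$ iff $A\precsim B\wedge B\precsim A$ and $A\prec B$ iff $A\precsim B\wedge\neg B\precsim A$, a finite sequence $(A_1,\dots,A_p)$ is lexicographically not greater than $(B_1,\dots,B_q)$ iff either $p\le q$ and $A_i\sim B_i$ for all $i\le p$, or there is $s<\min(p,q)$ with $A_i\sim B_i$ for $i\le s$ and $A_{s+1}\prec B_{s+1}$. A lexicographically maximal subsequence of a finite sequence is a subsequence that is lexicographically not less than every subsequence. The linear preorder $\precsim$ on $\mathsf{W}_\omega$ is defined by recursion on (largest symbol of $AB$) $-$ (smallest symbol of $AB$): $\Lambda\precsim\Lambda$; if $AB$ is nonempty with minimal symbol $n$, write uniquely $A=A_1n\cdots nA_k$, $B=B_1n\cdots nB_l$ ($k,l\ge1$) with $A_i,B_j\in\mathsf{S}_{n+1}$ (possibly empty); let $C,D$ be lexicographically maximal subsequences of $(A_1,\dots,A_k)$, $(B_1,\dots,B_l)$; then $A\precsim B$ iff $C$ is lexicographically not greater than $D$. The set $\mathsf{NF}$: $\Lambda\in\mathsf{NF}$; a word with minimal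 symbol $n$, written $A_1n\cdots nA_k$ with $k\ge2$, $A_i\in\mathsf{S}_{n+1}$, is in $\mathsf{NF}$ iff $A_k\precsim\dots\precsim A_1$ and all $A_i\in\mathsf{NF}$. Every word is equivalent to exactly one word of $\mathsf{NF}$. For $A\in\mathsf{NF}$, $\Diamond_nA$ is the unique word of $\mathsf{NF}$ equivalent to $An$. $\mathsf{W}^N_3=\mathsf{W}_3\cap\mathsf{NF}$. For $A,B\in\mathsf{W}^N_3$, $\mathrm{Sl}(A,B)$ (''$B$ is a slice of $A$'') holds iff $A\neq\Lambda$, $B\neq\Lambda$, and there are $n\ge m\ge1$ and $C_1,\dots,C_n\in\mathsf{S}_1$ with $A=C_10C_20\cdots0C_n$ and $B=C_10C_20\cdots0C_m$. *)

(* Defs.v *)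
From Stdlib Require Import ClassicalEpsilon.
From mathcomp Require Import all_boot.

Set Implicit Arguments.
Unset Strict Implicit.
Unset Printing Implicit Defensive.

Definition word := seq nat.

Definition Sk (k : nat) (A : word) : bool := all (fun x => k <= x) A.
Definition W3 (A : word) : bool := all (fun x => x <= 3) A.

(** smallest / largest symbol (only used on nonempty words) *)
Definition minsym (s : word) : nat := foldr minn (head 0 s) s.
Definition maxsym (s : word) : nat := foldr maxn 0 s.

(** [splitw n A] = [:: A_1; ...; A_k] where A = A_1 n A_2 n ... n A_k,
    the A_i not containing n (k >= 1, the A_i possibly empty). *)
Definition splitw (n : nat) (A : word) : seq word :=
  foldr (fun x acc => if x == n then [::] :: acc
                      else (x :: head [::] acc) :: behead acc) [:: [::]] A.

Definition joinw (n : nat) (Cs : seq word) : word :=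
  match Cs with
  | [::] => [::]
  | C :: Cs' => C ++ flatten [seq n :: X | X <- Cs']
  end.

Definition pequiv (le : word -> word -> Prop) (x y : word) : Prop := le x y /\ le y x.
Definition plt (le : word -> word -> Prop) (x y : word) : Prop := le x y /\ ~ le y x.

Definition lexle (le : word -> word -> Prop) (s t : seq word) : Prop :=
  (size s <= size t /\
     forall i, i < size s -> pequiv le (nth [::] s i) (nth [::] t i))
  \/
  (exists k, k < minn (size s) (size t) /\
     (forall i, i < k -> pequiv le (nth [::] s i) (nth [::] t i)) /\
     plt le (nth [::] s k) (nth [::] t k)).

Definition lexmax (le : word -> word -> Prop) (s c : seq word) : Prop :=
  subseq c s /\ forall c', subseq c' s -> lexle le c' c.

Fixpoint wle_rec (f : nat) (A B : word) : Prop :=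
  match f with
  | 0 => True
  | f'.+1 =>
      if A ++ B == [::] then True
      else
        let n := minsym (A ++ B) in
        exists C D : seq word,
          lexmax (wle_rec f') (splitw n A) C /\
          lexmax (wle_rec f') (splitw n B) D /\
          lexle (wle_rec f') C D
  end.

Definition wle (A B : word) : Prop :=
  wle_rec (maxsym (A ++ B) - minsym (A ++ B)).+1 A B.
Definition wlt (A B : word) : Prop := wle A B /\ ~ wle B A.
Definition weq (A B : word) : Prop := wle A B /\ wle B A.

Inductive NF : word -> Prop :=
  | NF_nil : NF [::]
  | NF_cons (A : word) :
      A <> [::] ->
      2 <= size (splitw (minsym A) A) ->
      (forall i, i.+1 < size (splitw (minsym A) A) ->
         wle (nth [::] (splitw (minsym A) A) i.+1)
             (nth [::] (splitw (minsym A) A) i)) ->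
      (forall P, P \in splitw (minsym A) A -> NF P) ->
      NF A.

Definition W3N : Type := {A : word | W3 A /\ NF A}.

Definition W3N_nil : W3N := exist _ [::] (conj (erefl true) NF_nil).

(** Diamond_n A : the (unique) normal-form word of W^N_3 equivalent to A n *)
Definition diamond (n : nat) (a : W3N) : W3N :=
  epsilon (inhabits W3N_nil) (fun b : W3N => weq (proj1_sig b) (rcons (proj1_sig a) n)).

Definition W3N_lt (a b : W3N) : Prop := wlt (proj1_sig a) (proj1_sig b).

Definition Sl (a b : W3N) : Prop :=
  let A := proj1_sig a in let B := proj1_sig b in
  A <> [::] /\ B <> [::] /\
  exists (Cs : seq word) (m : nat),
    1 <= m /\ m <= size Cs /\ all (Sk 1) Cs /\
    A = joinw 0 Cs /\ B = joinw 0 (take m Cs).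

Inductive term : Type :=
  | TVar (i : nat)
  | TD1 (t : term)
  | TD3 (t : term).

Inductive form : Type :=
  | FEq (t u : term)
  | FLt (t u : term)
  | FNot (p : form)
  | FAnd (p q : form)
  | FOr (p q : form)
  | FImp (p q : form)
  | FEx (i : nat) (p : form)
  | FAll (i : nat) (p : form).

Fixpoint teval (e : nat -> W3N) (t : term) : W3N :=
  match t with
  | TVar i => e i
  | TD1 t' => diamond 1 (teval e t')
  | TD3 t' => diamond 3 (teval e t')
  end.

Definition upd (e : nat -> W3N) (i : nat) (a : W3N) : nat -> W3N :=
  fun j => if j == i then a else e j.

Fixpoint holds (e : nat -> W3N) (p : form) : Prop :=
  match p with
  | FEq t u => teval e t = teval e u
  | FLt t u => W3N_lt (teval e t) (teval e u)
  | FNot q => ~ holds e q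
  | FAnd q r => holds e q /\ holds e r
  | FOr q r => holds e q \/ holds e r
  | FImp q r => holds e q -> holds e r
  | FEx i q => exists a, holds (upd e i a) q
  | FAll i q => forall a, holds (upd e i a) q
  end.

Definition definable2 (P : W3N -> W3N -> Prop) : Prop :=
  exists phi : form, forall e : nat -> W3N, holds e phi <-> P (e 0) (e 1).

(* Main.v *)
Require Import Defs.
From Stdlib Require Import ClassicalEpsilon.
From mathcomp Require Import all_boot.
From mathcomp Require Import zify.
Set Implicit Arguments. Unset Strict Implicit. Unset Printing Implicit Defensive.

Section Gen.
Variable T : eqType.
Variable le : rel T.
Hypothesis le_refl : forall a, le a a.
Hypothesis le_anti : forall a b, le a b -> le b a -> a = b.
Hypothesis le_trans : forall a b c, le a b -> le b c -> le a c.
Hypothesis le_total : forall a b, le a b || le b a.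

Fixpoint lexG (s t : seq T) : bool :=
  match s, t with
  | [::], _ => true
  | _ :: _, [::] => false
  | a :: s', b :: t' => (le a b && (a != b)) || ((a == b) && lexG s' t')
  end.

Lemma lexG_refl s : lexG s s.
Proof. by elim: s => //= a s ->; rewrite eqxx orbT. Qed.

Lemma lexG_anti s t : lexG s t -> lexG t s -> s = t.
Proof.
elim: s t => [|a s IH] [|b t] //=.
case/orP=> [/andP[h1 h2]|/andP[/eqP-> h]].
  case/orP=> [/andP[h3 _]|/andP[/eqP e _]]; first by move: h2; rewrite (le_anti h1 h3) eqxx.
  by move: h2; rewrite e eqxx.
case/orP=> [/andP[_]|/andP[_ h']]; first by rewrite eqxx.
by rewrite (IH _ h h').
Qed.

Lemma lexG_trans s t u : lexG s t -> lexG t u -> lexG s u.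
Proof.
elim: s t u => [|a s IH] [|b t] [|c u] //=.
case/orP=> [/andP[h1 h2]|/andP[/eqP<- h]].
  case/orP=> [/andP[h3 h4]|/andP[/eqP<- _]]; last by rewrite h1 h2.
  have hac := le_trans h1 h3.
  case: (eqVneq a c) => [eac|nac]; last by rewrite hac.

  by subst c; move: h2; rewrite (le_anti h1 h3) eqxx.
case/orP=> [/andP[h3 h4]|/andP[/eqP<- h']]; first by rewrite h3 h4.
by rewrite eqxx (IH _ _ h h') orbT.
Qed.

Lemma lexG_total s t : lexG s t || lexG t s.
Proof.
elim: s t => [|a s IH] [|b t] //=.
case: (eqVneq a b) => [<-|nab] /=; first by rewrite !andbF /= IH.
by move: (le_total a b); case: (le a b); case: (le b a).
Qed.

Lemma lexG_cat r s t : lexG (r ++ s) (r ++ t) = lexG s t.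
Proof. by elim: r => //= a r ->; rewrite eqxx andbF. Qed.

Lemma lexG_prefix s t : lexG s (s ++ t).
Proof. by rewrite -{1}(cats0 s) lexG_cat. Qed.

(* right-to-left maxima *)
Fixpoint rtlG (u : seq T) : seq T :=
  match u with
  | [::] => [::]
  | x :: u' => if all (fun y => le y x) u' then x :: rtlG u' else rtlG u'
  end.

Lemma rtlG_subseq u : subseq (rtlG u) u.
Proof.
elim: u => //= x u IH; case: ifP => _; first by rewrite eqxx.
exact: subseq_trans IH (subseq_cons _ _).
Qed.

Lemma rtlG_nil u : (rtlG u == [::]) = (u == [::]).
Proof.
elim: u => //= x u IH; case: ifP => // /allPn [z zin _].
by rewrite IH; case: u zin {IH}.
Qed.

Lemma lexG_single a b t : le a b -> lexG [:: a] (b :: t).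
Proof. by move=> h /=; case: (eqVneq a b) => [->|]; rewrite ?eqxx ?orbT //= h. Qed.

Lemma rtlG_max u v : subseq v u -> lexG v (rtlG u).
Proof.
elim: u v => [|x u IH] v.
  by rewrite subseq0 => /eqP->.
case: v => [|y v] // hs.
have hs' : subseq (if y == x then v else y :: v) u := hs.
rewrite [rtlG _]/=.
case hall: (all (fun y => le y x) u).
  case: (eqVneq y x) hs' => [->|nyx] hs'.
    by rewrite /= eqxx (IH _ hs') orbT.
  have yin : y \in u by apply: (mem_subseq hs'); rewrite inE eqxx.
  by rewrite /= (allP hall _ yin) nyx.
case: (eqVneq y x) hs' => [->|nyx] hs'; last exact: IH.
case/allPn: hall => z zin hz.
have hxz : le x z by have := le_total z x; rewrite (negbTE hz).
have hnxz : x != z by apply/eqP=> e; subst; rewrite le_refl in hz.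
apply: (@lexG_trans _ [:: z]); first by rewrite /= hxz hnxz.
by apply: IH; rewrite sub1seq.
Qed.

Lemma rtlG_head u x0 : u != [::] -> forall c, c \in u -> le c (head x0 (rtlG u)).
Proof.
elim: u => //= x u IH _ c; rewrite inE.
case: ifP => hall.
  by case/orP => [/eqP->|cin] /=; [apply: le_refl| exact: (allP hall)].
case/allPn: hall => z zin hz.
have hxz : le x z by have := le_total z x; rewrite (negbTE hz).
have hu : u != [::] by case: u zin {IH}.
case/orP => [/eqP->|cin]; last exact: IH.
exact: le_trans hxz (IH hu _ zin).
Qed.

Definition ge a b := le b a.
Lemma ge_trans : transitive ge.
Proof. by move=> b a c h1 h2; apply: le_trans h2 h1. Qed.

Lemma rtlG_sorted u : sorted ge (rtlG u).
Proof.
elim: u => //= x u IH; case: ifP => // hall.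
rewrite /= (path_sortedE ge_trans) IH andbT.
apply/allP=> y yin; apply: (allP hall); exact: (mem_subseq (rtlG_subseq u)).
Qed.

Lemma rtlG_id u : sorted ge u -> rtlG u = u.
Proof.
elim: u => //= x u IH hp.
rewrite (path_sortedE ge_trans) in hp; case/andP: hp => hall hs.
by rewrite ifT ?IH //.
Qed.

Lemma rtlG_rcons u z : (forall a, a \in u -> le z a) -> rtlG (rcons u z) = rcons (rtlG u) z.
Proof.
elim: u => [|x u IH] h /=; first by [].
rewrite all_rcons h ?inE ?eqxx // andbC /= IH; last by move=> a ain; apply: h; rewrite inE ain orbT.
by rewrite andbT; case: ifP.
Qed.

End Gen.

Section Gen2.
Variable T : eqType.
Variable le : rel T.
Hypothesis le_refl : forall a, le a a.
Hypothesis le_anti : forall a b, le a b -> le b a -> a = b.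

Lemma lexGP x0 s t : lexG le s t <->
  (size s <= size t /\ forall i, i < size s -> nth x0 s i = nth x0 t i) \/
  (exists k, k < minn (size s) (size t) /\ (forall i, i < k -> nth x0 s i = nth x0 t i) /\
     (le (nth x0 s k) (nth x0 t k) && (nth x0 s k != nth x0 t k))).
Proof.
elim: s t => [|a s IH] [|b t] /=.
- by split=> // _; left.
- by split=> // _; left.
- split=> //; case=> [[]|[k []]] //; by rewrite minn0.
- split.
  + case/orP=> [h|/andP[/eqP-> h]]; first by right; exists 0; split=> //; rewrite minnSS.
    case/IH: h => [[h1 h2]|[k [h1 [h2 h3]]]].
      by left; split=> // [[|i]] //= /h2.
    by right; exists k.+1; split; [rewrite minnSS|split=> // [[|i]] //= /h2].
  + case=> [[h1 h2]|[k [h1 [h2 h3]]]].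
      have eab : a = b by apply: (h2 0).
      subst b; rewrite eqxx /=; apply/orP; right; apply/IH; left; split=> // i hi.
      by apply: (h2 i.+1).
    case: k h1 h2 h3 => [|k] h1 h2 h3 /=; first by rewrite h3.
    have eab : a = b by apply: (h2 0).
    subst b; rewrite eqxx /=; apply/orP; right; apply/IH; right; exists k.
    by rewrite minnSS in h1; split=> //; split=> // i hi; apply: (h2 i.+1).
Qed.
End Gen2.

Definition lexn : seq nat -> seq nat -> bool := lexG leq.
Lemma leq_anti' (a b : nat) : a <= b -> b <= a -> a = b.
Proof. by move=> h1 h2; apply/eqP; rewrite eqn_leq h1 h2. Qed.
Lemma leq_trans' (a b c : nat) : a <= b -> b <= c -> a <= c.
Proof. exact: leq_trans. Qed.

Lemma lexn_refl s : lexn s s. Proof. exact: lexG_refl. Qed.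
Lemma lexn_anti s t : lexn s t -> lexn t s -> s = t.
Proof. exact: (@lexG_anti nat leq leq_anti'). Qed.
Lemma lexn_trans s t u : lexn s t -> lexn t u -> lexn s u.
Proof. exact: (@lexG_trans nat leq leq_anti' leq_trans'). Qed.
Lemma lexn_total s t : lexn s t || lexn t s.
Proof. exact: (@lexG_total nat leq leq_total). Qed.

Definition lexS := lexG lexn.
Definition rtl := rtlG lexn.

Lemma lexS_refl s : lexS s s. Proof. exact: (@lexG_refl _ lexn). Qed.
Lemma lexS_anti s t : lexS s t -> lexS t s -> s = t.
Proof. exact: (@lexG_anti _ lexn lexn_anti). Qed.
Lemma lexS_trans s t u : lexS s t -> lexS t u -> lexS s u.
Proof. exact: (@lexG_trans _ lexn lexn_anti lexn_trans). Qed.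
Lemma lexS_total s t : lexS s t || lexS t s.
Proof. exact: (@lexG_total _ lexn lexn_total). Qed.

Lemma rtl_max u v : subseq v u -> lexS v (rtl u).
Proof. exact: (@rtlG_max _ lexn lexn_refl lexn_anti lexn_trans lexn_total). Qed.
Lemma rtl_subseq u : subseq (rtl u) u. Proof. exact: (@rtlG_subseq _ lexn). Qed.
Lemma rtl_nil u : (rtl u == [::]) = (u == [::]). Proof. exact: (@rtlG_nil _ lexn). Qed.
Lemma rtl_sorted u : sorted (ge lexn) (rtl u).
Proof. exact: (@rtlG_sorted _ lexn lexn_trans). Qed.
Lemma rtl_id u : sorted (ge lexn) u -> rtl u = u.
Proof. exact: (@rtlG_id _ lexn lexn_trans). Qed.
Lemma rtl_head u x0 : u != [::] -> forall c, c \in u -> lexn c (head x0 (rtl u)).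
Proof. exact: (@rtlG_head _ lexn lexn_refl lexn_trans lexn_total). Qed.
Lemma rtl_rcons u z : (forall a, a \in u -> lexn z a) -> rtl (rcons u z) = rcons (rtl u) z.
Proof. exact: (@rtlG_rcons _ lexn). Qed.
Lemma ge_lexn_trans : transitive (ge lexn).
Proof. exact: (@ge_trans _ lexn lexn_trans). Qed.

Section Link.
Variable R : word -> word -> Prop.
Variable g : word -> seq nat.
Variable D : seq word.
Hypothesis hR : forall x y, x \in D -> y \in D -> (R x y <-> lexn (g x) (g y)).

Lemma pequivE x y : x \in D -> y \in D -> (pequiv R x y <-> g x = g y).
Proof.
move=> hx hy; rewrite /pequiv (hR hx hy) (hR hy hx); split.
  by case=> h1 h2; apply: lexn_anti.
by move=> ->; rewrite lexn_refl.
Qed.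

Lemma pltE x y : x \in D -> y \in D -> (plt R x y <-> (lexn (g x) (g y) && (g x != g y))).
Proof.
move=> hx hy; rewrite /plt (hR hx hy) (hR hy hx); split.
  case=> h1 h2; rewrite h1 /=; apply/eqP=> e; apply: h2; rewrite e lexn_refl //.
case/andP=> h1 h2; split=> // h3; move: h2; rewrite (lexn_anti h1 h3) eqxx //.
Qed.

Lemma lexleE c d : {subset c <= D} -> {subset d <= D} ->
  (lexle R c d <-> lexS (map g c) (map g d)).
Proof.
move=> hc hd; rewrite /lexS (lexGP _ (g [::])) !size_map /lexle.
have Ec i : i < size c -> nth (g [::]) (map g c) i = g (nth [::] c i) by move=> hi; rewrite (nth_map [::]).
have Ed i : i < size d -> nth (g [::]) (map g d) i = g (nth [::] d i) by move=> hi; rewrite (nth_map [::]).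
have Mc i : i < size c -> nth [::] c i \in D by move=> hi; apply: hc; apply: mem_nth.
have Md i : i < size d -> nth [::] d i \in D by move=> hi; apply: hd; apply: mem_nth.
split.
- case=> [[h1 h2]|[k [h1 [h2 h3]]]].
    left; split=> // i hi; have hi' : i < size d by apply: leq_trans h1.
    by rewrite Ec // Ed //; apply/pequivE; [apply: Mc|apply: Md|apply: h2].
  have hkc : k < size c by apply: leq_trans h1 (geq_minl _ _).
  have hkd : k < size d by apply: leq_trans h1 (geq_minr _ _).
  right; exists k; split=> //; split.
    move=> i hi; have hic := ltn_trans hi hkc; have hid := ltn_trans hi hkd.
    by rewrite Ec // Ed //; apply/pequivE; [apply: Mc|apply: Md|apply: h2].
  by rewrite Ec // Ed //; apply/pltE; [apply: Mc|apply: Md|].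
- case=> [[h1 h2]|[k [h1 [h2 h3]]]].
    left; split=> // i hi; have hi' : i < size d by apply: leq_trans h1.
    by apply/(pequivE (Mc _ hi) (Md _ hi')); rewrite -Ec // -Ed //; apply: h2.
  have hkc : k < size c by apply: leq_trans h1 (geq_minl _ _).
  have hkd : k < size d by apply: leq_trans h1 (geq_minr _ _).
  right; exists k; split=> //; split.
    move=> i hi; have hic := ltn_trans hi hkc; have hid := ltn_trans hi hkd.
    by apply/(pequivE (Mc _ hic) (Md _ hid)); rewrite -Ec // -Ed //; apply: h2.
  by apply/(pltE (Mc _ hkc) (Md _ hkd)); rewrite -Ec // -Ed.
Qed.

Fixpoint rtlw (s : seq word) : seq word :=
  match s with
  | [::] => [::]
  | x :: s' => if all (fun y => lexn (g y) (g x)) s' then x :: rtlw s' else rtlw s'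
  end.

Lemma rtlw_map s : map g (rtlw s) = rtl (map g s).
Proof. by elim: s => //= x s IH; rewrite all_map; case: ifP => _ //=; rewrite IH. Qed.

Lemma rtlw_subseq s : subseq (rtlw s) s.
Proof.
elim: s => //= x s IH; case: ifP => _; first by rewrite eqxx.
exact: subseq_trans IH (subseq_cons _ _).
Qed.

Lemma lexmax_ex s : {subset s <= D} -> lexmax R s (rtlw s).
Proof.
move=> hs; split; first exact: rtlw_subseq.
move=> c' hc'; apply/lexleE.
- by move=> x /(mem_subseq hc') /hs.
- by move=> x /(mem_subseq (rtlw_subseq s)) /hs.
rewrite rtlw_map; apply: rtl_max; exact: map_subseq.
Qed.

Lemma lexmax_rtl s C : {subset s <= D} -> lexmax R s C -> map g C = rtl (map g s).
Proof.
move=> hs [hC hmax].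
have hCD : {subset C <= D} by move=> x /(mem_subseq hC) /hs.
have hrD : {subset rtlw s <= D} by move=> x /(mem_subseq (rtlw_subseq s)) /hs.
rewrite -rtlw_map; apply: lexS_anti.
  by apply/lexleE => //; case: (lexmax_ex hs) => _; apply.
by apply/lexleE => //; apply: hmax; apply: rtlw_subseq.
Qed.

End Link.

Fixpoint cut (h : nat) (w : seq nat) : seq nat :=
  match w with
  | [::] => [::]
  | a :: w' => if a == 0 then (if h is h'.+1 then a :: cut h' w' else [:: a])
               else a :: cut h.+1 w'
  end.

Definition code (x : seq nat) :=
  (forall s, cut 0 (x ++ s) = x) /\ (forall h s, cut h.+1 (x ++ s) = x ++ cut h s).

Definition ecat (r : seq (seq nat)) : seq nat := flatten (map (cons 2) r) ++ [:: 0].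

Lemma ecat_cons c r : ecat (c :: r) = 2 :: c ++ ecat r.
Proof. by rewrite /ecat /= catA. Qed.

Lemma code_ecat r : (forall c, c \in r -> code c) -> code (ecat r).
Proof.
elim: r => [|c r IH] hr; first by split=> [s|h s].
have [hc1 hc2] := hr c (mem_head _ _).
have [hr1 hr2] : code (ecat r) by apply: IH => x xin; apply: hr; rewrite inE xin orbT.
rewrite ecat_cons; split=> [s|h s] /=; rewrite -catA hc2 ?hr1 ?hr2 ?catA //.
Qed.

Lemma code_pf x y s t : code x -> code y -> x ++ s = y ++ t -> x = y.
Proof. by case=> hx _ [hy _] e; rewrite -(hx s) e hy. Qed.

Lemma lexn_cat_np x y s t : (forall w, x ++ w != y) -> (forall w, y ++ w != x) ->
  lexn (x ++ s) (y ++ t) = lexn x y.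
Proof.
elim: x y => [|a x IH] [|b y] h1 h2 /=.
- by move: (h1 [::]).
- by move: (h1 (b :: y)); rewrite eqxx.
- by move: (h2 (a :: x)); rewrite eqxx.
- rewrite /lexn /= -/lexn; case: (eqVneq a b) => [eab|nab] //=.
  subst b; rewrite IH // => w; [move: (h1 w)|move: (h2 w)]; by rewrite /= eqseq_cons eqxx.
Qed.

Lemma lexn_cat_same x s t : lexn (x ++ s) (x ++ t) = lexn s t.
Proof. exact: lexG_cat. Qed.

Lemma lexn_code x y s t : code x -> code y -> x != y -> lexn (x ++ s) (y ++ t) = lexn x y.
Proof.
move=> cx cy nxy; apply: lexn_cat_np => w; apply/eqP => e.
  by move: nxy; rewrite (@code_pf x y w [::] cx cy) ?cats0 ?e ?eqxx.
by move: nxy; rewrite (@code_pf y x w [::] cy cx) ?cats0 ?e ?eqxx.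
Qed.

Lemma lex_ecat r r' : (forall c, c \in r -> code c) -> (forall c, c \in r' -> code c) ->
  lexn (ecat r) (ecat r') = lexS r r'.
Proof.
elim: r r' => [|c r IH] [|d r'] hr hr' //.
- rewrite !ecat_cons /lexS /= -/lexS /lexn /= -/lexn.
  have cc := hr c (mem_head _ _); have cd := hr' d (mem_head _ _).
  case: (eqVneq c d) => [ecd|ncd] /=.
    subst d; rewrite lexn_cat_same lexn_refl IH // => x xin.
      by apply: hr; rewrite inE xin orbT.
    by apply: hr'; rewrite inE xin orbT.
  by rewrite lexn_code // andbT orbF.
Qed.

Lemma lexn0l c : c != [::] -> lexn [:: 0] c.
Proof. by case: c => // a c _; rewrite /lexn /=; case: a. Qed.

Lemma lexn0r c : c != [::] -> lexn c [:: 0] = (c == [:: 0]).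
Proof. by case: c => // a c _; rewrite /lexn /=; case: a => //= ; case: c. Qed.

Lemma ecat_2 r : r != [::] -> exists t, ecat r = 2 :: t.
Proof. by case: r => // c r _; rewrite ecat_cons; eexists. Qed.

Lemma ecat_nn r : ecat r != [::].
Proof. by rewrite /ecat; case: (flatten _). Qed.

Lemma ecat_inj r r' : (forall c, c \in r -> code c) -> (forall c, c \in r' -> code c) ->
  ecat r = ecat r' -> r = r'.
Proof.
move=> hr hr' e; apply: lexS_anti.
  by rewrite -lex_ecat // e lexn_refl.
by rewrite -lex_ecat // e lexn_refl.
Qed.

Lemma splitw_cons n a A : splitw n (a :: A) =
  if a == n then [::] :: splitw n A else (a :: head [::] (splitw n A)) :: behead (splitw n A).
Proof. by []. Qed.

Lemma splitw_nonnil n A : splitw n A != [::].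
Proof. by case: A => // a A; rewrite splitw_cons; case: ifP. Qed.

Lemma size_splitw n A : size (splitw n A) = (count_mem n A).+1.
Proof.
elim: A => // a A IH; rewrite splitw_cons /=.
case: (eqVneq a n) => [_|nan] /=; first by rewrite IH.
by rewrite size_behead IH.
Qed.

Lemma mem_splitw n A P x : P \in splitw n A -> x \in P -> (x \in A) && (x != n).
Proof.
elim: A P => [|a A IH] P.
  by rewrite inE => /eqP->.
rewrite splitw_cons; case: (eqVneq a n) => [ean|nan].
  rewrite inE => /orP[/eqP->//|/IH h /h]; move=> /andP[h1 h2].
  by rewrite inE h1 h2 orbT.
have hne := splitw_nonnil n A.
case E: (splitw n A) hne => [|Q S] // _ /=.
rewrite inE => /orP[/eqP->|PS].
  rewrite inE => /orP[/eqP->|xQ]; first by rewrite inE eqxx.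
  have := IH Q; rewrite E inE eqxx => /(_ isT xQ) /andP[h1 h2]; by rewrite inE h1 h2 orbT.
move=> xP; have := IH P; rewrite E inE PS orbT => /(_ isT xP) /andP[h1 h2].
by rewrite inE h1 h2 orbT.
Qed.

Lemma splitw_notin n A : n \notin A -> splitw n A = [:: A].
Proof.
elim: A => // a A IH; rewrite inE negb_or => /andP[na nA].
by rewrite splitw_cons eq_sym (negbTE na) IH.
Qed.

Lemma joinw_splitw n A : joinw n (splitw n A) = A.
Proof.
elim: A => // a A IH; rewrite splitw_cons.
have hne := splitw_nonnil n A.
case E: (splitw n A) hne IH => [|P S] // _ IH.
case: (eqVneq a n) => [->|nan] /=; first by rewrite -IH.
by rewrite -IH.
Qed.

Lemma splitw_app n C w : n \notin C ->
  splitw n (C ++ w) = (C ++ head [::] (splitw n w)) :: behead (splitw n w).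
Proof.
elim: C => [|a C IH].
  by move=> _ /=; have := splitw_nonnil n w; case: (splitw n w).
rewrite inE negb_or => /andP[na nC].
by rewrite splitw_cons eq_sym (negbTE na) IH.
Qed.

Lemma splitw_flat n (Cs : seq word) : (forall C, C \in Cs -> n \notin C) ->
  splitw n (flatten [seq n :: X | X <- Cs]) = [::] :: Cs.
Proof.
elim: Cs => // D Cs IH h.
have -> : flatten [seq n :: X | X <- D :: Cs] = n :: (D ++ flatten [seq n :: X | X <- Cs]) by [].
rewrite splitw_cons eqxx splitw_app ?IH ?cats0 //.
  by move=> C CC; apply: h; rewrite inE CC orbT.
by apply: h; rewrite inE eqxx.
Qed.

Lemma splitw_joinw n (Cs : seq word) : Cs != [::] -> (forall C, C \in Cs -> n \notin C) ->
  splitw n (joinw n Cs) = Cs.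
Proof.
case: Cs => // C Cs _ h /=.
rewrite splitw_app ?splitw_flat ?cats0 //.
  by move=> D DC; apply: h; rewrite inE DC orbT.
by apply: h; rewrite inE eqxx.
Qed.

Lemma splitw_rcons n A x : x != n ->
  exists bs bl, splitw n A = rcons bs bl /\ splitw n (rcons A x) = rcons bs (rcons bl x).
Proof.
move=> xn; elim: A => [|a A [bs [bl [E1 E2]]]].
  by exists [::], [::]; rewrite [rcons _ _]/= splitw_cons (negbTE xn).
rewrite rcons_cons !splitw_cons E1 E2.
case: ifP => _.
  by exists ([::] :: bs), bl.
case: bs {E1 E2} => [|c bs] /=.
  by exists [::], (a :: bl).
by exists ((a :: c) :: bs), bl.
Qed.

Lemma splitw_rcons_n n A : splitw n (rcons A n) = rcons (splitw n A) [::].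
Proof.
elim: A => [|a A IH]; first by rewrite [rcons _ _]/= splitw_cons eqxx.
rewrite rcons_cons !splitw_cons IH; case: ifP => // _.
have := splitw_nonnil n A; case: (splitw n A) => //.
Qed.

Lemma minsym_gen d s : (foldr minn d s <= d) /\ (forall x, x \in s -> foldr minn d s <= x)
  /\ (foldr minn d s \in d :: s).
Proof.
elim: s => [|a s [h1 [h2 h3]]] /=; first by rewrite leqnn inE eqxx.
split; first by rewrite geq_min h1 orbT.
split.
  move=> x; rewrite inE => /orP[/eqP->|xs]; first by rewrite geq_minl.
  by rewrite geq_min h2 ?orbT.
rewrite /minn; case: ifP => _; first by rewrite !inE eqxx orbT.
move: h3; rewrite !inE => /orP[->//|->]; by rewrite !orbT.
Qed.

Lemma minsym_le s x : x \in s -> minsym s <= x.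
Proof. by have [_ [h _]] := minsym_gen (head 0 s) s; apply: h. Qed.

Lemma minsym_in s : s != [::] -> minsym s \in s.
Proof.
case: s => // a s _; have [_ [_ h]] := minsym_gen a (a :: s).
by move: h; rewrite /minsym /= inE => /orP[/eqP->|//]; rewrite inE eqxx.
Qed.

Lemma maxsym_ge s x : x \in s -> x <= maxsym s.
Proof.
elim: s => // a s IH; rewrite inE /maxsym /= -/(maxsym s) => /orP[/eqP->|/IH h].
  by rewrite leq_maxl.
by rewrite leq_max h orbT.
Qed.

Lemma maxsym_le s M : (forall x, x \in s -> x <= M) -> maxsym s <= M.
Proof.
elim: s => // a s IH h; rewrite /maxsym /= -/(maxsym s) geq_max h ?inE ?eqxx //=.
by apply: IH => x xs; apply: h; rewrite inE xs orbT.
Qed.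

Fixpoint enc (K n : nat) (A : word) : seq nat :=
  match K with
  | 0 => [:: 0]
  | K'.+1 => if A == [::] then [:: 0] else ecat (rtl (map (enc K' n.+1) (splitw n A)))
  end.

Lemma enc_nil K n : enc K n [::] = [:: 0].
Proof. by case: K. Qed.

Lemma enc_S K n A : A != [::] ->
  enc K.+1 n A = ecat (rtl (map (enc K n.+1) (splitw n A))).
Proof. by move=> /negbTE h /=; rewrite h. Qed.

Lemma enc_code K n A : code (enc K n A).
Proof.
elim: K n A => [|K IH] n A /=; first by split.
case: ifP => _; first by split.
apply: code_ecat => c /(mem_subseq (rtl_subseq _)) /mapP [P _ ->]; exact: IH.
Qed.

Lemma enc_nn K n A : enc K n A != [::].
Proof. by case: K => //= K; case: ifP => // _; apply: ecat_nn. Qed.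

Lemma enc_2 K n A : A != [::] -> 0 < K -> exists t, enc K n A = 2 :: t.
Proof.
case: K => // K hA _; rewrite enc_S //; apply: ecat_2.
by rewrite rtl_nil; case: (splitw n A) (splitw_nonnil n A).
Qed.

Lemma enc_ne0 K n A : A != [::] -> 0 < K -> enc K n A != [:: 0].
Proof. by move=> h1 h2; case: (enc_2 n h1 h2) => t ->. Qed.

Lemma Sk_mono m n A : n <= m -> Sk m A -> Sk n A.
Proof. by move=> h /allP hA; apply/allP => x /hA; apply: leq_trans. Qed.

Lemma Sk_notin n A : Sk n.+1 A -> n \notin A.
Proof. by move=> /allP h; apply/negP => /h; rewrite ltnn. Qed.

Lemma rtl_single x : rtl [:: x] = [:: x].
Proof. by []. Qed.

Lemma lexS_single x y : lexS [:: x] [:: y] = lexn x y.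
Proof.
rewrite /lexS /=; case: (eqVneq x y) => [->|nxy] /=; first by rewrite lexn_refl.
by rewrite andbT orbF.
Qed.

Lemma enc_wrap K n A : Sk n.+1 A -> A != [::] -> enc K.+1 n A = ecat [:: enc K n.+1 A].
Proof. by move=> hS hA; rewrite enc_S // splitw_notin ?Sk_notin. Qed.

Lemma all_cat_nil (A B : word) : A ++ B = [::] -> A = [::] /\ B = [::].
Proof. by case: A; case: B. Qed.

Lemma unwrap1 K n A B : Sk n.+1 (A ++ B) -> all (fun x => x < n + K.+1) (A ++ B) ->
  lexn (enc K.+1 n A) (enc K.+1 n B) = lexn (enc K n.+1 A) (enc K n.+1 B).
Proof.
move=> hS hb.
have hSA : Sk n.+1 A by move: hS; rewrite /Sk all_cat => /andP[].
have hSB : Sk n.+1 B by move: hS; rewrite /Sk all_cat => /andP[].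
have Kpos : forall X, X != [::] -> {subset X <= A ++ B} -> 0 < K.
  move=> X; case: X => // a X _ hX; have ha : a \in A ++ B by apply: hX; rewrite inE eqxx.
  have h1 := allP hS a ha; have h2 := allP hb a ha.
  by rewrite lt0n; apply/eqP => K0; move: h2; rewrite K0 addn1 ltnS leqNgt h1.
case: (eqVneq A [::]) => [->|nA].
  by rewrite !enc_nil !lexn0l ?enc_nn.
have K0 : 0 < K by apply: (Kpos A) => // x xA; rewrite mem_cat xA.
case: (eqVneq B [::]) => [->|nB].
  rewrite !enc_nil enc_wrap // !lexn0r ?enc_nn ?ecat_nn //.
  by rewrite (negbTE (enc_ne0 _ nA K0)); case: (ecat_2 (r := [:: enc K n.+1 A])) => // t ->.
rewrite !enc_wrap // lex_ecat ?lexS_single // => c; rewrite inE => /eqP->; exact: enc_code.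
Qed.

Lemma unwrap k : forall n K A B, Sk (n + k) (A ++ B) -> all (fun x => x < n + K) (A ++ B) ->
  lexn (enc K n A) (enc K n B) = lexn (enc (K - k) (n + k) A) (enc (K - k) (n + k) B).
Proof.
elim: k => [|k IH] n K A B hS hb; first by rewrite addn0 subn0.
case: (eqVneq (A ++ B) [::]) => [/all_cat_nil [-> ->]|nAB]; first by rewrite !enc_nil.
have [a ha] : exists a, a \in A ++ B by case: (A ++ B) nAB => // a s _; exists a; rewrite inE eqxx.
have h1 := allP hS a ha; have h2 := allP hb a ha.
case: K hb h2 => [|K] hb h2; first by lia.
rewrite unwrap1 //; last by apply: Sk_mono hS; rewrite addnS ltnS leq_addr.
rewrite (IH n.+1 K) //.
- by rewrite subSS addSnnS.
- by rewrite addSnnS.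
- by rewrite addSnnS.
Qed.

Lemma lexS_sc x y t : lexn x y -> lexS [:: x] (y :: t).
Proof.
move=> h; have E : lexS [:: x] (y :: t) = (lexn x y && (x != y)) || ((x == y) && lexS [::] t) by [].
by rewrite E h; case: (x == y).
Qed.

Lemma Lam1 v : (forall c, c \in v -> c != [::]) -> 1 < size v ->
  lexS [:: [:: 0]] (rtl v) /\ rtl v != [:: [:: 0]].
Proof.
case: v => // c v hv hs.
have h1 : lexS [:: [:: 0]] (c :: v).
  by apply: lexS_sc; apply: lexn0l; apply: hv; rewrite inE eqxx.
have h2 : lexS (c :: v) (rtl (c :: v)) by apply: rtl_max; apply: subseq_refl.
split.
  exact: lexS_trans h1 h2.
apply/eqP=> e; rewrite e in h2.
by move: hs; rewrite (lexS_anti h2 h1).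
Qed.

Theorem corr f : forall n K A B, Sk n (A ++ B) -> all (fun x => x < n + K) (A ++ B) ->
  (A ++ B != [::] -> maxsym (A ++ B) - minsym (A ++ B) < f) ->
  (wle_rec f A B <-> lexn (enc K n A) (enc K n B)).
Proof.
elim: f => [|f IH] n K A B hS hb hf.
  case: (eqVneq (A ++ B) [::]) => [/all_cat_nil [-> ->]|nAB]; last by move: (hf nAB).
  by rewrite !enc_nil lexn_refl.
rewrite /=; case: (eqVneq (A ++ B) [::]) => [/all_cat_nil [-> ->]|nAB].
  by rewrite !enc_nil lexn_refl.
set m := minsym (A ++ B).
have hm : m \in A ++ B by apply: minsym_in.
have hnm : n <= m by apply: (allP hS).
have hmK : m < n + K by apply: (allP hb).
have hSm : Sk m (A ++ B) by apply/allP => x; apply: minsym_le.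
rewrite (unwrap (k := m - n)) ?subnKC //.
have [K'' hK''] : exists K'', K - (m - n) = K''.+1.
  by exists (K - (m - n)).-1; rewrite prednK // subn_gt0 ltn_subLR // ?addnC.
rewrite hK''.
set g := enc K'' m.+1.
set D := splitw m A ++ splitw m B.
have hD : forall P x, P \in D -> x \in P -> (x \in A ++ B) && (m < x).
  move=> P x; rewrite mem_cat => /orP[hP|hP] hx.
    have /andP[xA xm] := mem_splitw hP hx.
    have hx' : x \in A ++ B by rewrite mem_cat xA.
    by rewrite hx' ltn_neqAle eq_sym xm (allP hSm).
  have /andP[xB xm] := mem_splitw hP hx.
  have hx' : x \in A ++ B by rewrite mem_cat xB orbT.
  by rewrite hx' ltn_neqAle eq_sym xm (allP hSm).
have hR : forall P Q, P \in D -> Q \in D -> (wle_rec f P Q <-> lexn (g P) (g Q)).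
  move=> P Q hP hQ.
  have hPQ : forall x, x \in P ++ Q -> (x \in A ++ B) && (m < x).
    by move=> x; rewrite mem_cat => /orP[/(hD _ _ hP)|/(hD _ _ hQ)].
  apply: IH.
  - by apply/allP => x /hPQ /andP[].
  - apply/allP => x /hPQ /andP[xAB _]; have := allP hb x xAB.
    by move=> h; lia.
  - move=> nPQ; have := hf nAB.
    have hmax : maxsym (P ++ Q) <= maxsym (A ++ B).
      by apply: maxsym_le => x /hPQ /andP[xAB _]; apply: maxsym_ge.
    have hmin : m < minsym (P ++ Q) by have /hPQ /andP[_ ->] := minsym_in nPQ.
    have hmm := maxsym_ge (minsym_in nPQ).
    move=> h; have hmd : minsym (A ++ B) = m by [].
    clearbody m; rewrite hmd in h; move: hmax hmin hmm h.
    move: (maxsym (P ++ Q)) (minsym (P ++ Q)) (maxsym (A ++ B)) => a b c; lia.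
have step : (exists C D0 : seq word, lexmax (wle_rec f) (splitw m A) C /\
              lexmax (wle_rec f) (splitw m B) D0 /\ lexle (wle_rec f) C D0)
            <-> lexS (rtl (map g (splitw m A))) (rtl (map g (splitw m B))).
  have sA : {subset splitw m A <= D} by move=> x xA; rewrite mem_cat xA.
  have sB : {subset splitw m B <= D} by move=> x xB; rewrite mem_cat xB orbT.
  split.
    case=> C [D0 [h1 [h2 h3]]].
    rewrite -(lexmax_rtl hR sA h1) -(lexmax_rtl hR sB h2).
    have sC : {subset C <= D} by move=> x xC; apply: sA; case: h1 => /mem_subseq h _; exact: h.
    have sD : {subset D0 <= D} by move=> x xC; apply: sB; case: h2 => /mem_subseq h _; exact: h.
    by apply/(lexleE hR sC sD).
  move=> h; exists (rtlw g (splitw m A)), (rtlw g (splitw m B)).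
  split; first exact: (lexmax_ex hR sA).
  split; first exact: (lexmax_ex hR sB).
  have sC : {subset rtlw g (splitw m A) <= D} by move=> x /(mem_subseq (rtlw_subseq _ _)) /sA.
  have sD : {subset rtlw g (splitw m B) <= D} by move=> x /(mem_subseq (rtlw_subseq _ _)) /sB.
  by apply/(lexleE hR sC sD); rewrite !rtlw_map.
rewrite step.
have codes : forall X c, c \in rtl (map g (splitw m X)) -> code c.
  by move=> X c /(mem_subseq (rtl_subseq _)) /mapP [P _ ->]; apply: enc_code.
have nonn : forall X c, c \in map g (splitw m X) -> c != [::].
  by move=> X c /mapP [P _ ->]; apply: enc_nn.
case: (eqVneq A [::]) => [eA|nA].
  have g0 : g [::] = [:: 0] by rewrite /g enc_nil.
  rewrite eA; have -> : enc K''.+1 m [::] = [:: 0] by [].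
  have -> : [seq g i | i <- splitw m [::]] = [:: [:: 0]] by rewrite /= g0.
  have nB : B != [::] by move: nAB; rewrite eA.
  rewrite lexn0l ?enc_nn //.
  have mB : m \in B by move: hm; rewrite eA.
  case: (Lam1 (v := map g (splitw m B))).
  - exact: nonn.
  - by rewrite size_map size_splitw ltnS lt0n; apply/eqP/count_memPn; rewrite mB.
  - by move=> h1 _; split.
case: (eqVneq B [::]) => [eB|nB].
  have g0 : g [::] = [:: 0] by rewrite /g enc_nil.
  rewrite eB; have -> : enc K''.+1 m [::] = [:: 0] by [].
  have -> : [seq g i | i <- splitw m [::]] = [:: [:: 0]] by rewrite /= g0.
  rewrite enc_S // lexn0r ?ecat_nn //.
  have mA : m \in A by move: hm; rewrite eB cats0.
  case: (Lam1 (v := map g (splitw m A))).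
  - exact: nonn.
  - by rewrite size_map size_splitw ltnS lt0n; apply/eqP/count_memPn; rewrite mA.
  move=> h1 h2; have -> : (ecat (rtl (map g (splitw m A))) == [:: 0]) = false.
    by case: (ecat_2 (r := rtl (map g (splitw m A)))) => [|t ->] //; rewrite rtl_nil; case: (splitw m A) (splitw_nonnil m A).
  split=> // h3; move: h2; rewrite (lexS_anti h3 h1) eqxx //.
rewrite !enc_S // lex_ecat //; [apply: codes|apply: codes].
Qed.

Lemma wle_enc n K A B : Sk n (A ++ B) -> all (fun x => x < n + K) (A ++ B) ->
  (wle A B <-> lexn (enc K n A) (enc K n B)).
Proof. by move=> h1 h2; apply: corr. Qed.

Lemma joinw_cons2 n C D Cs : joinw n (C :: D :: Cs) = C ++ n :: joinw n (D :: Cs).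
Proof. by []. Qed.

Lemma mem_joinw n (Cs : seq word) x : x \in joinw n Cs -> (x == n) || has (fun C => x \in C) Cs.
Proof.
case: Cs => // C Cs; elim: Cs C => [|D Cs IH] C.
  by rewrite /= cats0 => h; rewrite h /= orbT.
rewrite joinw_cons2 mem_cat inE => /orP[h|/orP[h|/IH]].
- by apply/orP; right; apply/hasP; exists C; rewrite ?inE ?eqxx.
- by rewrite h.
- case/orP=> [->//|/hasP [E hE xE]]; apply/orP; right; apply/hasP; exists E => //.
  by rewrite inE hE orbT.
Qed.

Lemma in_joinw n (Cs : seq word) : 1 < size Cs -> n \in joinw n Cs.
Proof. by case: Cs => [|C [|D Cs]] // _; rewrite joinw_cons2 mem_cat inE eqxx orbT. Qed.

Lemma minsym_eq n A : Sk n A -> n \in A -> minsym A = n.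
Proof.
move=> hS hn; apply/eqP; rewrite eqn_leq minsym_le //=.
by apply: (allP hS); apply: minsym_in; case: A hn {hS}.
Qed.

Lemma NF_inv A : NF A -> A != [::] ->
  [/\ 2 <= size (splitw (minsym A) A),
      (forall i, i.+1 < size (splitw (minsym A) A) ->
         wle (nth [::] (splitw (minsym A) A) i.+1) (nth [::] (splitw (minsym A) A) i)) &
      (forall P, P \in splitw (minsym A) A -> NF P)].
Proof. by case=> // A' _ h1 h2 h3 _; split. Qed.

Lemma piece_good n K A P : Sk n A -> all (fun x => x < n + K.+1) A -> P \in splitw n A ->
  Sk n.+1 P /\ all (fun x => x < n.+1 + K) P.
Proof.
move=> hS hb hP; split; apply/allP => x hx; have /andP[xA xn] := mem_splitw hP hx.
  by rewrite ltn_neqAle eq_sym xn (allP hS).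
by rewrite addSnnS; apply: (allP hb).
Qed.

Lemma NF_pieces n K P : NF P -> P != [::] -> Sk n P -> all (fun x => x < n + K.+1) P ->
  (forall Q, Q \in splitw n P -> NF Q) /\ sorted (ge lexn) (map (enc K n.+1) (splitw n P)).
Proof.
move=> hNF nP hS hb.
case: (boolP (n \in P)) => hn; last by rewrite splitw_notin //; split=> // Q; rewrite inE => /eqP->.
have [h1 h2 h3] := NF_inv hNF nP; rewrite (minsym_eq hS hn) in h1 h2 h3.
split=> //; apply/(sortedP [::]) => i; rewrite size_map => hi.
have hi' : i < size (splitw n P) by apply: ltnW.
rewrite /ge (nth_map [::]) // (nth_map [::]) //.
have g1 := piece_good hS hb (mem_nth [::] hi); have g2 := piece_good hS hb (mem_nth [::] hi').
have c1 : Sk n.+1 (nth [::] (splitw n P) i.+1 ++ nth [::] (splitw n P) i).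
  by rewrite /Sk all_cat; apply/andP; split; [case: g1|case: g2].
have c2 : all (fun x => x < n.+1 + K) (nth [::] (splitw n P) i.+1 ++ nth [::] (splitw n P) i).
  by rewrite all_cat; apply/andP; split; [case: g1|case: g2].
exact: (wle_enc c1 c2).1 (h2 i hi).
Qed.

Lemma enc_inj K : forall n P Q, Sk n P -> Sk n Q -> all (fun x => x < n + K) P ->
  all (fun x => x < n + K) Q -> NF P -> NF Q -> enc K n P = enc K n Q -> P = Q.
Proof.
elim: K => [|K IH] n P Q hSP hSQ hbP hbQ hP hQ.
  have e0 : forall X, Sk n X -> all (fun x => x < n + 0) X -> X = [::].
    move=> [|x X] // /allP h1 /allP h2; have := h1 x (mem_head _ _); have := h2 x (mem_head _ _).
    by rewrite addn0 => a b; move: (leq_trans a b); rewrite ltnn.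
  by rewrite (e0 P) // (e0 Q).
case: (eqVneq P [::]) => [->|nP]; case: (eqVneq Q [::]) => [->|nQ] //.
- by rewrite enc_nil => /esym/eqP; rewrite (negbTE (enc_ne0 _ nQ _)).
- by rewrite enc_nil => /eqP; rewrite (negbTE (enc_ne0 _ nP _)).
have [p1 p2] := NF_pieces hP nP hSP hbP; have [q1 q2] := NF_pieces hQ nQ hSQ hbQ.
rewrite !enc_S // !rtl_id // => /ecat_inj e.
have {}e : map (enc K n.+1) (splitw n P) = map (enc K n.+1) (splitw n Q).
  apply: e => c /mapP [X _ ->]; exact: enc_code.
rewrite -(joinw_splitw n P) -(joinw_splitw n Q); congr joinw.
have gP := fun X => piece_good (P := X) hSP hbP; have gQ := fun X => piece_good (P := X) hSQ hbQ.
move: (splitw n P) (splitw n Q) gP gQ p1 q1 e; elim=> [|X ps IHl] [|Y qs] //= gP gQ p1 q1 [e1 e2].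
have [gX1 gX2] := gP X (mem_head _ _); have [gY1 gY2] := gQ Y (mem_head _ _).
rewrite (IH n.+1 X Y gX1 gY1 gX2 gY2 (p1 X (mem_head _ _)) (q1 Y (mem_head _ _)) e1); congr cons.
apply: IHl => // Z hZ; [apply: gP|apply: gQ|apply: p1|apply: q1]; by rewrite inE hZ orbT.
Qed.

Lemma norm_ex K : forall n A, Sk n A -> all (fun x => x < n + K) A ->
  exists N, [/\ Sk n N, all (fun x => x < n + K) N, NF N & enc K n N = enc K n A].
Proof.
elim: K => [|K IH] n A hS hb.
  have -> : A = [::].
    move: hS hb; case: A => [|x X] // /allP h1 /allP h2; have := h1 x (mem_head _ _); have := h2 x (mem_head _ _).
    by rewrite addn0 => a b; move: (leq_trans a b); rewrite ltnn.
  by exists [::]; split=> //; apply: NF_nil.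
case: (eqVneq A [::]) => [->|nA]; first by exists [::]; split=> //; apply: NF_nil.
set g := enc K n.+1.
set ps := splitw n A.
have good : forall X, X \in ps -> Sk n.+1 X /\ all (fun x => x < n.+1 + K) X.
  by move=> X hX; apply: piece_good hS hb hX.
have lst : forall l, {subset l <= ps} -> exists Ns, map g Ns = map g l /\
    forall N, N \in Ns -> [/\ Sk n.+1 N, all (fun x => x < n.+1 + K) N & NF N].
  elim=> [|X l IHl] hl; first by exists [::].
  have [Ns [e1 e2]] : exists Ns, map g Ns = map g l /\
      forall N, N \in Ns -> [/\ Sk n.+1 N, all (fun x => x < n.+1 + K) N & NF N].
    by apply: IHl => Y hY; apply: hl; rewrite inE hY orbT.
  have [g1 g2] := good X (hl X (mem_head _ _)).
  have [N [h1 h2 h3 h4]] := IH n.+1 X g1 g2.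
  exists (N :: Ns); split; first by rewrite /= e1 /g h4.
  by move=> M; rewrite inE => /orP[/eqP->|/e2].
have [Ns [eN hN]] : exists Ns, map g Ns = rtl (map g ps) /\
    forall N, N \in Ns -> [/\ Sk n.+1 N, all (fun x => x < n.+1 + K) N & NF N].
  have [Ns [e1 e2]] := lst (rtlw g ps) (fun x hx => mem_subseq (rtlw_subseq g ps) hx).
  by exists Ns; rewrite e1 rtlw_map.
have hsort : sorted (ge lexn) (map g Ns) by rewrite eN; apply: rtl_sorted.
have encA : enc K.+1 n A = ecat (map g Ns) by rewrite enc_S // eN.
case: Ns eN hN hsort encA => [|N1 [|N2 Ns]] eN hN hsort encA.
- by move: eN => /esym/eqP; rewrite rtl_nil -size_eq0 size_map size_eq0 /ps (negbTE (splitw_nonnil n A)).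
- have [hN1 hN2 hN3] := hN N1 (mem_head _ _).
  have nN1 : N1 != [::].
    apply/eqP => e1; rewrite e1 /= /g enc_nil in eN.
    case: (boolP (n \in A)) => hn.
      case: (Lam1 (v := map g ps)).
      + by move=> c /mapP [X _ ->]; apply: enc_nn.
      + by rewrite size_map size_splitw ltnS lt0n; apply/eqP/count_memPn; rewrite hn.
      + by move=> _; rewrite -eN eqxx.
    move: eN; rewrite /ps splitw_notin // rtl_single => [[]] /esym/eqP.
    have K0 : 0 < K.
      have [a ha] : exists a, a \in A by move: nA; case: (A) => // a' A' _; exists a'; rewrite inE eqxx.
      have h1 := allP hS a ha; have h2 := allP hb a ha.
      have hna : a != n by apply: contraNneq hn => <-.
      lia.
    by rewrite (negbTE (enc_ne0 _ nA K0)).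
  exists N1; split=> //.
  + by apply: Sk_mono hN1.
  + by move: hN2; rewrite addSnnS.
  + by rewrite encA enc_wrap.
- set Cs := [:: N1, N2 & Ns].
  have hCs : forall C, C \in Cs -> n \notin C by move=> C /hN [h _ _]; apply: Sk_notin.
  have sC : splitw n (joinw n Cs) = Cs by apply: splitw_joinw.
  have hin : n \in joinw n Cs by apply: in_joinw.
  have hSN : Sk n (joinw n Cs).
    apply/allP => x /mem_joinw /orP[/eqP->//|/hasP [C /hN [/allP h _ _] /h]].
    by apply: ltnW.
  have hbN : all (fun x => x < n + K.+1) (joinw n Cs).
    apply/allP => x /mem_joinw /orP[/eqP->|/hasP [C /hN [_ /allP h _] /h]].
      by rewrite -addSnnS ltn_addr.
    by rewrite addSnnS.
  have nN : joinw n Cs != [::] by case: (joinw n Cs) hin.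
  exists (joinw n Cs); split=> //; last by rewrite encA enc_S // sC rtl_id.
  have hm : minsym (joinw n Cs) = n := minsym_eq hSN hin.
  apply: NF_cons.
  + by apply/eqP.
  + by rewrite hm sC.
  + move=> i; rewrite hm sC => hi; have hi' : i < size Cs by apply: ltnW.
    have := (sortedP [::] hsort) i; rewrite size_map => /(_ hi).
    rewrite /ge (nth_map [::]) // (nth_map [::]) //.
    have [a1 a2 _] := hN _ (mem_nth [::] hi); have [b1 b2 _] := hN _ (mem_nth [::] hi').
    move=> h; apply/(wle_enc (n := n.+1) (K := K)) => //.
      by rewrite /Sk all_cat; apply/andP.
    by rewrite all_cat; apply/andP.
  + by rewrite hm sC => P /hN [].
Qed.

Lemma lexS_cons a b s t : lexS (a :: s) (b :: t) = (lexn a b && (a != b)) || ((a == b) && lexS s t).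
Proof. by []. Qed.

Lemma lexS_cons_same a s t : lexS (a :: s) (a :: t) = lexS s t.
Proof. by rewrite lexS_cons eqxx andbF. Qed.

Lemma lexS_nilr s : lexS s [::] -> s = [::].
Proof. by case: s. Qed.

Lemma sorted_rcons_ge s y : sorted (ge lexn) (rcons s y) -> forall a, a \in s -> lexn y a.
Proof.
elim: s => // a s IH; rewrite rcons_cons /= (path_sortedE ge_lexn_trans) => /andP[h1 h2] b.
rewrite inE => /orP[/eqP->|bs]; last exact: IH.
by move: h1; rewrite all_rcons => /andP[].
Qed.

Lemma rtl_rcons_big s z : (forall a, a \in s -> lexn a z && (a != z)) -> rtl (rcons s z) = [:: z].
Proof.
elim: s => // a s IH h; rewrite rcons_cons.
have [h1 h2] : lexn a z /\ a != z by apply/andP; apply: h; rewrite inE eqxx.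
have -> : rtl (a :: rcons s z) = if all (fun y => lexn y a) (rcons s z) then a :: rtl (rcons s z) else rtl (rcons s z) by [].
rewrite all_rcons.
have -> : lexn z a = false by apply/negP => h3; move: h2; rewrite (lexn_anti h1 h3) eqxx.
by rewrite /= IH // => b bs; apply: h; rewrite inE bs orbT.
Qed.

Lemma const_prefix y V t : (forall a, a \in V -> a = y) -> (forall a, a \in t -> lexn a y) ->
  lexS V t -> prefix V t.
Proof.
elim: V t => [|a V IH] [|b t] // hV ht.
have ea : a = y by apply: hV; rewrite inE eqxx.
subst a; rewrite lexS_cons => /orP[/andP[h1 h2]|/andP[/eqP<- h]].
  have h3 : lexn b y by apply: ht; rewrite inE eqxx.
  by move: h2; rewrite (lexn_anti h1 h3) eqxx.
rewrite /= eqxx /=; apply: IH => // [a ain|a ain]; [apply: hV|apply: ht]; by rewrite inE ain orbT.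
Qed.

Lemma prefix_lexS s t : prefix s t -> lexS s t.
Proof. by rewrite prefixE => /eqP e; rewrite -e -{2}(cat_take_drop (size s) t); apply: lexG_prefix. Qed.

Section Key.
Variables y yp : seq nat.
Hypothesis hyy : lexn y yp.
Hypothesis nyy : y != yp.

Lemma key_aux d u' V : y != d -> (lexn y d -> lexn d yp -> d != yp -> d = y) ->
  lexS (y :: V) (d :: u') -> lexS (d :: u') [:: yp] -> d :: u' != [:: yp] -> False.
Proof.
move=> nyd hs; rewrite !lexS_cons (negbTE nyd) /= ?andbF ?orbF ?andbT => h1.
case/orP => [/andP[h2 h3]|/andP[/eqP e /lexS_nilr e']].
  by move: nyd; rewrite (hs h1 h2 h3) eqxx.
by rewrite e e' eqxx.
Qed.

Lemma key : forall v' u, sorted (ge lexn) (rcons v' y) -> sorted (ge lexn) u ->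
  (forall c, c \in u ++ v' -> lexn y c -> lexn c yp -> c != yp -> c = y) ->
  prefix (rcons v' y) u = [&& lexS (rcons v' y) u, lexS u (rtl (rcons v' yp)) & u != rtl (rcons v' yp)].
Proof.
elim=> [|c v IH] u hsv hsu hsucc.
  have -> : rtl (rcons [::] yp) = [:: yp] by [].
  rewrite [rcons [::] y]/=.
  case: u hsu hsucc => [|d u'] hsu hsucc //.
  case: (eqVneq y d) => [<-|nyd].
    by rewrite lexS_cons_same lexS_cons hyy nyy eqseq_cons (negbTE nyy) /= eqxx prefix0s.
  rewrite prefix_cons (negbTE nyd) andFb.
  apply/esym/negP => /and3P [h1 h2 h3].
  apply: (key_aux nyd _ h1 h2 h3) => hd1 hd2 hd3; apply: hsucc => //; by rewrite inE eqxx.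
rewrite rcons_cons in hsv *.
have hc : all (fun x => lexn x c) (rcons v y) by apply: (order_path_min ge_lexn_trans hsv).
have hsv' : sorted (ge lexn) (rcons v y) by apply: path_sorted hsv.
have hcv : forall a, a \in v -> lexn a c by move=> a av; apply: (allP hc); rewrite mem_rcons inE av orbT.
have -> : rtl (c :: rcons v yp) = if all (fun x => lexn x c) (rcons v yp) then c :: rtl (rcons v yp)
     else rtl (rcons v yp) by [].
rewrite all_rcons (_ : all (fun x => lexn x c) v = true); last by apply/allP.
rewrite andbT.
case: (boolP (lexn yp c)) => hyc.
  case: u hsu hsucc => [|d u'] hsu hsucc //.
  case: (eqVneq c d) => [<-|ncd].
    rewrite prefix_cons eqxx andTb !lexS_cons_same eqseq_cons eqxx andTb; apply: IH => //.
      exact: path_sorted hsu.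
    move=> a; rewrite mem_cat => /orP[au|av]; apply: hsucc; rewrite mem_cat !inE ?au ?av ?orbT //.
  rewrite prefix_cons (negbTE ncd) andFb.
  apply/esym/negP => /and3P [h1 h2 _].
  move: h1 h2; rewrite !lexS_cons (negbTE ncd) eq_sym (negbTE ncd) /= !andbT !orbF => h1 h2.
  by move: ncd; rewrite (lexn_anti h1 h2) eqxx.
have hcy : lexn c yp by have := lexn_total c yp; rewrite (negbTE hyc) orbF.
have ncy : c != yp by apply: contraNneq hyc => ->; apply: lexn_refl.
have hyc' : lexn y c by apply: (allP hc); rewrite mem_rcons inE eqxx.
have ecy : c = y by apply: hsucc => //; rewrite mem_cat inE eqxx orbT.
subst c.
rewrite rtl_rcons_big; last first.
  move=> a av; have h1 := hcv a av; rewrite (lexn_trans h1 hyy) /=.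
  by apply: contra_neq nyy => e; subst a; apply: lexn_anti.
case: u hsu hsucc => [|d u'] hsu hsucc //.
case: (eqVneq y d) => [e|nyd].
  subst d; rewrite prefix_cons eqxx andTb lexS_cons_same lexS_cons hyy nyy eqseq_cons (negbTE nyy) /= andbT.
  apply/idP/idP; first by apply: prefix_lexS.
  apply: const_prefix.
    move=> a; rewrite mem_rcons inE => /orP[/eqP->//|av].
    by apply: lexn_anti; [apply: hcv|apply: (sorted_rcons_ge hsv')].
  by move=> a ain; have := allP (order_path_min ge_lexn_trans hsu) a ain.
rewrite prefix_cons (negbTE nyd) andFb.
apply/esym/negP => /and3P [h1 h2 h3].
apply: (key_aux nyd _ h1 h2 h3) => hd1 hd2 hd3; apply: hsucc => //; by rewrite inE eqxx.
Qed.
End Key.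

Definition G := enc 3 1.
Definition G' := enc 2 2.
Definition E := enc 4 0.

Lemma lex_between z R S : (forall a, a \in S -> lexn z a) -> lexS R S -> lexS S (rcons R z) ->
  S != rcons R z -> S = R.
Proof.
elim: R S => [|r R IH] [|s S] hz h1 h2 h3 //.
- move: h2 h3; rewrite [rcons _ _]/= lexS_cons => /orP[/andP[h1' h2']|/andP[/eqP e /lexS_nilr e']].
    have h3' : lexn z s by apply: hz; rewrite inE eqxx.
    by move: h2'; rewrite (lexn_anti h1' h3') eqxx.
  by rewrite e e' eqxx.
- move: h1 h2 h3; rewrite rcons_cons !lexS_cons => /orP[/andP[h1 h2]|/andP[/eqP e h]].
    case/orP => [/andP[h3 _]|/andP[/eqP e _]]; last by move: h2; rewrite e eqxx.
    by move: h2; rewrite (lexn_anti h1 h3) eqxx.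
  subst s; rewrite eqxx /= ?andbF /= => h' hne; rewrite (IH S) //.
    by move=> a ain; apply: hz; rewrite inE ain orbT.
  by move: hne; rewrite eqseq_cons eqxx.
Qed.

Lemma rtl_const z x : (forall c, c \in x -> c = z) -> rtl x = x.
Proof.
elim: x => // a x IH h.
have ea : a = z by apply: h; rewrite inE eqxx.
have -> : rtl (a :: x) = if all (fun y => lexn y a) x then a :: rtl x else rtl x by [].
rewrite ifT ?IH //; first by move=> c cx; apply: h; rewrite inE cx orbT.
by apply/allP => c cx; rewrite (h c) ?inE ?cx ?orbT // ea lexn_refl.
Qed.

Lemma codes_rtl K n X c : c \in rtl (map (enc K n) X) -> code c.
Proof. by move=> /(mem_subseq (rtl_subseq _)) /mapP [P _ ->]; apply: enc_code. Qed.

Lemma nn_rtl K n X c : c \in rtl (map (enc K n) X) -> c != [::].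
Proof. by move=> /(mem_subseq (rtl_subseq _)) /mapP [P _ ->]; apply: enc_nn. Qed.

Lemma G_rcons b : G (rcons b 1) = ecat (rcons (rtl (map G' (splitw 1 b))) [:: 0]).
Proof.
rewrite /G enc_S; last by case: b.
rewrite splitw_rcons_n map_rcons enc_nil rtl_rcons //.
by move=> a /mapP [P _ ->]; apply: lexn0l; apply: enc_nn.
Qed.

Lemma succ P b : Sk 1 P -> W3 P -> Sk 1 b -> W3 b ->
  [/\ lexn (G b) (G (rcons b 1)), G b != G (rcons b 1) &
      (lexn (G b) (G P) -> lexn (G P) (G (rcons b 1)) -> G P != G (rcons b 1) -> G P = G b)].
Proof.
move=> hSP hWP hSb hWb.
rewrite G_rcons.
set R := rtl (map G' (splitw 1 b)).
have cR : forall c, c \in R -> code c by move=> c; apply: codes_rtl.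
have cR' : forall c, c \in rcons R [:: 0] -> code c.
  by move=> c; rewrite mem_rcons inE => /orP[/eqP->|]; [apply: (enc_code 0 0 [::])|apply: cR].
have nR : R != [::] by rewrite rtl_nil -size_eq0 size_map size_eq0 splitw_nonnil.
case: (eqVneq P [::]) => [eP|nP].
  case: (eqVneq b [::]) => [eb|nb].
    rewrite eP eb /G !enc_nil; split.
    - by apply: lexn0l; apply: ecat_nn.
    - by case: (ecat_2 (r := rcons R [:: 0])) => [|t ->] //; rewrite -size_eq0 size_rcons.
    - by [].
  rewrite eP /G enc_nil enc_S // -/G' -/R; split.
  - by rewrite lex_ecat // /lexS -cats1 lexG_prefix.
  - by apply/eqP => /ecat_inj e; move: (e cR cR') => /(congr1 size); rewrite size_rcons => /n_Sn.
  - move=> h; move: h; rewrite lexn0r ?ecat_nn //; case: (ecat_2 nR) => t ->; by [].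
have [S eS] : exists S, G P = ecat S /\ S = rtl (map G' (splitw 1 P)) by exists (rtl (map G' (splitw 1 P))); rewrite /G enc_S.
case: eS => eS eS'.
have cS : forall c, c \in S -> code c by rewrite eS' => c; apply: codes_rtl.
have nS : forall c, c \in S -> c != [::] by rewrite eS' => c; apply: nn_rtl.
rewrite eS.
case: (eqVneq b [::]) => [eb|nb].
  have -> : R = [:: [:: 0]] by rewrite /R eb.
  rewrite eb /G enc_nil; split.
  - by apply: lexn0l; apply: ecat_nn.
  - by case: (ecat_2 (r := [:: [:: 0]; [:: 0]])) => [|t ->].
  move=> _; rewrite lex_ecat // => [h1 h2|c]; last by rewrite !inE => /orP[]/eqP->; apply: (enc_code 0 0 [::]).
  exfalso; move: h2; have -> : ecat S != ecat [:: [:: 0]; [:: 0]] = (S != [:: [:: 0]; [:: 0]]).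
    apply/idP/idP.
      by apply: contra => /eqP->.
    apply: contra => /eqP e; apply/eqP; apply: ecat_inj e => //.
    by move=> c; rewrite !inE => /orP[]/eqP->; apply: (enc_code 0 0 [::]).
  set x := map G' (splitw 1 P) in eS'.
  have nx : x != [::] by rewrite -size_eq0 size_map size_eq0 splitw_nonnil.
  have hd := rtl_head [::] nx; rewrite -eS' in hd.
  case: S eS eS' cS nS h1 hd => [|s0 S'] eS eS' cS nS h1 hd.
    by move: eS'; move/esym/eqP; rewrite rtl_nil (negbTE nx).
  move: h1; rewrite lexS_cons lexn0r ?nS ?inE ?eqxx //.
  case: (eqVneq s0 [:: 0]) => [e0|ne0] h1; last by move: h1.
  rewrite /= in h1.
  subst s0; rewrite /= in hd.
  have allz : forall c, c \in x -> c = [:: 0].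
    move=> c cx; have := hd c cx; rewrite lexn0r; first by move/eqP.
    by move: cx => /mapP [Q _ ->]; apply: enc_nn.
  have ex : rtl x = x by apply: rtl_const allz.
  rewrite ex in eS'.
  case: (boolP (1 \in P)) => h1P.
    have sx : 1 < size x by rewrite size_map size_splitw ltnS lt0n; apply/eqP/count_memPn; rewrite h1P.
    rewrite -eS' /= in sx.
    case: S' eS eS' h1 sx cS nS => [|s1 S''] eS eS' h1 sx cS nS //.
    have es1 : s1 = [:: 0] by apply: allz; rewrite -eS' !inE eqxx orbT.
    subst s1; move: h1; rewrite lexS_cons_same => /lexS_nilr ->; by rewrite eqxx.
  have := allz (G' P); rewrite /x splitw_notin // inE eqxx => /(_ isT) /eqP.
  rewrite (negbTE (enc_ne0 _ nP _)) //.
rewrite /G enc_S // -/G' -/R; split.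
- by rewrite lex_ecat // /lexS -cats1 lexG_prefix.
- by apply/eqP => /ecat_inj e; move: (e cR cR') => /(congr1 size); rewrite size_rcons => /n_Sn.
rewrite !lex_ecat // => h1 h2 h3.
rewrite (@lex_between [:: 0] R S) //.
- by move=> a ain; apply: lexn0l; apply: nS.
by apply: contra h3 => /eqP ->.
Qed.

Lemma W3_lt4 X : W3 X -> all (fun x => x < 0 + 4) X.
Proof. by move=> /allP h; apply/allP => x /h. Qed.

Lemma lt4_W3 X : all (fun x => x < 0 + 4) X -> W3 X.
Proof. by move=> /allP h; apply/allP => x /h. Qed.

Lemma Sk0 X : Sk 0 X.
Proof. by apply/allP. Qed.

Lemma wleE A B : W3 A -> W3 B -> (wle A B <-> lexn (E A) (E B)).
Proof.
move=> hA hB; apply: wle_enc; first exact: Sk0.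
by rewrite all_cat !W3_lt4.
Qed.

Lemma piece_W3 X P : W3 X -> P \in splitw 0 X -> Sk 1 P /\ W3 P.
Proof.
move=> hX hP; split; apply/allP => x hx; have /andP[xX x0] := mem_splitw hP hx.
  by rewrite lt0n.
exact: (allP hX).
Qed.

Lemma prefix_map_inj (f : word -> seq nat) (s t : seq word) :
  (forall x y, x \in s ++ t -> y \in s ++ t -> f x = f y -> x = y) ->
  prefix (map f s) (map f t) = prefix s t.
Proof.
elim: s t => [|a s IH] [|b t] h; rewrite ?prefix0s //.
rewrite [map f (a :: s)]/= [map f (b :: t)]/= !prefix_cons.
have -> : (f a == f b) = (a == b).
  apply/eqP/eqP => [e|->//]; apply: h e; rewrite ?mem_cat ?inE ?eqxx ?orbT //.
rewrite IH // => x y hx hy; apply: h; move: hx hy; rewrite !mem_cat !inE.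
  by case/orP=> ->; rewrite ?orbT.
by move=> _ /orP[] ->; rewrite ?orbT.
Qed.

Lemma Mcomb A B : W3 A -> NF A -> W3 B -> NF B -> B != [::] ->
  (A != [::]) && prefix (splitw 0 B) (splitw 0 A) =
  [&& lexn (E B) (E A), lexn (E A) (E (rcons B 1)) & ~~ lexn (E (rcons B 1)) (E A)].
Proof.
move=> wA nfA wB nfB nB.
case: (eqVneq A [::]) => [->|nA].
  by rewrite /E enc_nil lexn0r ?enc_nn // (negbTE (enc_ne0 _ nB _)).
have [pA sA] := NF_pieces nfA nA (Sk0 A) (W3_lt4 wA).
have [pB sB] := NF_pieces nfB nB (Sk0 B) (W3_lt4 wB).
have [bs [bl [eB eB1]]] := @splitw_rcons 0 B 1 isT.
have gA : forall P, P \in splitw 0 A -> Sk 1 P /\ W3 P by move=> P; apply: piece_W3.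
have gB : forall P, P \in splitw 0 B -> Sk 1 P /\ W3 P by move=> P; apply: piece_W3.
have blB : bl \in splitw 0 B by rewrite eB mem_rcons inE eqxx.
have [hbl1 hbl2] := gB bl blB.
have [hy1 hy2 _] := succ hbl1 hbl2 hbl1 hbl2.
have EA : E A = ecat (map G (splitw 0 A)) by rewrite /E enc_S // rtl_id.
have EB : E B = ecat (map G (splitw 0 B)) by rewrite /E enc_S // rtl_id.
have EB1 : E (rcons B 1) = ecat (rtl (rcons (map G bs) (G (rcons bl 1)))).
  by rewrite /E enc_S ?eB1 ?map_rcons //; case: (B) => [|? ?].
have cM : forall X c, c \in map G X -> code c by move=> X c /mapP [P _ ->]; apply: enc_code.
have cR : forall c, c \in rtl (rcons (map G bs) (G (rcons bl 1))) -> code c.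
  move=> c /(mem_subseq (rtl_subseq _)); rewrite mem_rcons inE => /orP[/eqP->|]; first exact: enc_code.
  exact: cM.
rewrite EA EB EB1 !lex_ecat //.
set u := map G (splitw 0 A).
set w := rtl (rcons (map G bs) (G (rcons bl 1))).
have -> : [&& lexS (map G (splitw 0 B)) u, lexS u w & ~~ lexS w u] =
          [&& lexS (map G (splitw 0 B)) u, lexS u w & u != w].
  case: (lexS _ u) => //=; case: (boolP (lexS u w)) => //= huw.
  apply/idP/idP.
    by apply: contra => /eqP->; apply: lexS_refl.
  by apply: contra => h; apply/eqP; apply: lexS_anti.
have -> : map G (splitw 0 B) = rcons (map G bs) (G bl) by rewrite eB map_rcons.
rewrite /w -(key hy1 hy2); first last.
- move=> c; rewrite mem_cat => /orP[|] /mapP [P hP ->] h1 h2 h3.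
    have [g1 g2] := gA P hP; by have [_ _ ->] := succ g1 g2 hbl1 hbl2.
  have hP' : P \in splitw 0 B by rewrite eB mem_rcons inE hP orbT.
  have [g1 g2] := gB P hP'; by have [_ _ ->] := succ g1 g2 hbl1 hbl2.
- exact: sA.
- by rewrite -map_rcons -eB.
rewrite -map_rcons -eB prefix_map_inj //.
move=> x y; rewrite !mem_cat => hx hy.
have hgx : [/\ Sk 1 x, all (fun z => z < 1 + 3) x & NF x].
  case/orP: hx => hx; [have [h1 h2] := gB x hx|have [h1 h2] := gA x hx].
    by split=> //; apply: pB.
  by split=> //; apply: pA.
have hgy : [/\ Sk 1 y, all (fun z => z < 1 + 3) y & NF y].
  case/orP: hy => hy; [have [h1 h2] := gB y hy|have [h1 h2] := gA y hy].
    by split=> //; apply: pB.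
  by split=> //; apply: pA.
case: hgx => x1 x2 x3; case: hgy => y1 y2 y3.
exact: enc_inj.
all: by move=> c; apply: cM.
Qed.

Lemma W3_rcons B : W3 B -> W3 (rcons B 1).
Proof. by rewrite /W3 all_rcons => ->. Qed.

Lemma diamond_E (b : W3N) : E (proj1_sig (diamond 1 b)) = E (rcons (proj1_sig b) 1).
Proof.
case: b => B [wB nfB] /=.
have wB1 := W3_rcons wB.
have [N [h1 h2 h3 h4]] := norm_ex (Sk0 (rcons B 1)) (W3_lt4 wB1).
have wN := lt4_W3 h2.
have ex : exists d : W3N, weq (proj1_sig d) (rcons B 1).
  exists (exist _ N (conj wN h3)); rewrite /weq /=.
  by split; apply/wleE => //; rewrite /E h4 lexn_refl.
have := epsilon_spec (inhabits W3N_nil) (fun d : W3N => weq (proj1_sig d) (rcons B 1)) ex.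
rewrite /diamond /=.
case: (epsilon _ _) => D [wD nD] /= [e1 e2].
by apply: lexn_anti; [apply/(wleE wD wB1)|apply/(wleE wB1 wD)].
Qed.

Definition phi : form :=
  FAnd (FEx 2 (FLt (TVar 2) (TVar 1)))
       (FAnd (FNot (FLt (TVar 0) (TVar 1))) (FLt (TVar 0) (TD1 (TVar 1)))).

Theorem lemma6 : definable2 Sl.
Proof.
exists phi => e.
rewrite /phi /= /upd /=.
have dE := diamond_E (e 1).
move: (e 0) (e 1) dE => a b dE.
case: a => A [wA nfA]; case: b dE => B [wB nfB] /= dE.
rewrite /W3N_lt /=.
move: dE; set d := diamond 1 _; move=> dE.
have wD : W3 (sval d) by case: d {dE} => ? [].
move: (sval d) wD dE => D wD dE.
rewrite /wlt.
have lt1 : (exists x : W3N, wle (proj1_sig x) B /\ ~ wle B (proj1_sig x)) <-> B != [::].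
  split.
    case=> [[X [wX _]]] /= [h1 h2]; apply/negP => /eqP eB; subst B; apply: h2.
    by apply/wleE => //; rewrite /E enc_nil lexn0l ?enc_nn.
  move=> nB; exists W3N_nil; rewrite /=; split.
    by apply/wleE => //; rewrite /E enc_nil lexn0l ?enc_nn.
  move/(@wleE B [::] wB (erefl true)); rewrite /E enc_nil lexn0r ?enc_nn //.
  by rewrite (negbTE (enc_ne0 _ nB _)).
rewrite lt1.
have e2 : (~ (wle A B /\ ~ wle B A)) <-> lexn (E B) (E A).
  rewrite (wleE wA wB) (wleE wB wA); split.
    by case: (boolP (lexn (E B) (E A))) => // h1 h2; exfalso; apply: h2; split=> //;
      have := lexn_total (E A) (E B); rewrite (negbTE h1) orbF.
  by move=> h [_ h2].
have e3 : (wle A D /\ ~ wle D A) <-> (lexn (E A) (E D) && ~~ lexn (E D) (E A)).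
  rewrite (wleE wA wD) (wleE wD wA); split.
    by case=> -> /negP.
  by case/andP => -> /negP.
rewrite e2 e3 dE.
have hSl : Sl (exist _ A (conj wA nfA)) (exist _ B (conj wB nfB)) <->
           [/\ A != [::], B != [::] & prefix (splitw 0 B) (splitw 0 A)].
  rewrite /Sl /=; split.
    case=> nA [nB [Cs [m [hm1 [hm2 [hCs [eA eB]]]]]]].
    have nCs : Cs != [::] by case: Cs hm2 {hCs eA eB}; rewrite //= leqn0 => /eqP h; move: hm1; rewrite h.
    have h0 : forall C, C \in Cs -> 0 \notin C.
      move=> C hC; apply: Sk_notin; exact: (allP hCs).
    have nt : take m Cs != [::] by case: Cs nCs {h0 hCs eA eB hm2} => // c Cs _; case: m hm1.
    have h0' : forall C, C \in take m Cs -> 0 \notin C by move=> C /mem_take; apply: h0.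
    split; [by apply/eqP|by apply/eqP|].
    by rewrite eA eB !splitw_joinw // prefixE size_takel.
  case=> nA nB hp; split; first by apply/eqP.
  split; first by apply/eqP.
  exists (splitw 0 A), (size (splitw 0 B)); split; first by rewrite size_splitw.
  split; first exact: size_prefix hp.
  split.
    by apply/allP => P hP; case: (piece_W3 wA hP).
  split; first by rewrite joinw_splitw.
  by move: hp; rewrite prefixE => /eqP ->; rewrite joinw_splitw.
rewrite hSl.
case: (eqVneq B [::]) => [eB|nB].
  by split; [case=> []|case=> _ []].
have M := Mcomb wA nfA wB nfB nB.
split.
  case=> _ [h1 /andP[h2 h3]].
  have : [&& lexn (E B) (E A), lexn (E A) (E (rcons B 1)) & ~~ lexn (E (rcons B 1)) (E A)] by rewrite h1 h2 h3.
  by rewrite -M => /andP[hA hp].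
case=> hA _ hp.
have : (A != [::]) && prefix (splitw 0 B) (splitw 0 A) by rewrite hA hp.
rewrite M => /and3P[h1 h2 h3]; split=> //; split=> //; by rewrite h2 h3.
Qed.
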